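(* For every $k\ge 1$, the bi-hypergraph obtained from $\mathcal H_{2k+1}$ by adding a new vertex $v$, removing the edge $\{v_{1,1},v_{1,2},v_{1,3}\}$, and adding the edges $\{v,v_{2k+1,i},v_{2k+1,i+1}\}$ for $i\in[2]$ and $\{v,v_{1,j},v_{2k+1,j}\}$ for $j\in[3]$ is minimal uncolorable.
   Context: A bi-hypergraph $\mathcal H=(V,E)$ consists of a finite vertex set $V$ and a set $E$ of subsets of $V$, called edges, with no edge contained in another. A mapping $f:V\to\mathbb N$ is a proper coloring of $\mathcal H$ if $1<|f(e)|<|e|$ for every $e\in E$, where $f(e)=\{f(v):v\in e\}$. $\mathcal H$ is colorable if it has a proper coloring, and uncolorable otherwise. A subhypergraph of $\mathcal H$ is a bi-hypergraph $(V',E')$ with $V'\subseteq V$, $E'\subseteq E$; $\mathcal H$ is minimal uncolorable if it is uncolorable but every proper subhypergraph of it is colorable. For $k\ge 2$, $\mathcal H_k$ is the $3$-uniform bi-hypergraph with vertex set $\{v_{i,j}: i\in[k], j\in[3]\}$ (all distinct), with the convention $v_{i,4}=v_{i,1}$, $v_{i,5}=v_{i,2}$, whose edges are the sets $\{v_{i,1},v_{i,2},v_{i,3}\}$ for all $i\in[k]$ and the sets $\{v_{q+1,j},v_{q,j},v_{q,j+t}\}$ for all $q\in[k-1]$, $j\in[3]$, $t\in\{1,2\}$. *)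

(* Defs.v *)
From mathcomp Require Import all_boot.
Set Implicit Arguments. Unset Strict Implicit. Unset Printing Implicit Defensive.

Definition hypergraph (T : finType) : Type := ({set T} * {set {set T}})%type.

Definition is_bihypergraph (T : finType) (H : hypergraph T) : Prop :=
  (forall e, e \in H.2 -> e \subset H.1) /\
  (forall e1 e2, e1 \in H.2 -> e2 \in H.2 -> e1 \subset e2 -> e1 = e2).

Definition proper_coloring (T : finType) (H : hypergraph T) (f : T -> nat) : Prop :=
  forall e, e \in H.2 ->
    1 < size (undup [seq f x | x <- enum e]) < #|e|.

Definition colorable (T : finType) (H : hypergraph T) : Prop :=
  exists f : T -> nat, proper_coloring H f.

Definition subhypergraph (T : finType) (H' H : hypergraph T) : Prop :=
  is_bihypergraph H' /\ H'.1 \subset H.1 /\ H'.2 \subset H.2.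

Definition minimal_uncolorable (T : finType) (H : hypergraph T) : Prop :=
  is_bihypergraph H /\ ~ colorable H /\
  (forall H', subhypergraph H' H -> H' <> H -> colorable H').

(* Ambient type: Some (i, j) is v_{i+1, j+1}; None is an extra vertex v. *)
Definition Vt (m : nat) : finType := option ('I_m.+1 * 'I_3)%type.

(* v_{i,j} with 1-based indices i in [m+1], j in [5], with v_{i,4}=v_{i,1},
   v_{i,5}=v_{i,2}. *)
Definition vx (m i j : nat) : Vt m := Some (inord i.-1, inord (j.-1 %% 3)).

Definition newv (m : nat) : Vt m := None.

Definition triangle (m i : nat) : {set Vt m} := [set vx m i 1; vx m i 2; vx m i 3].

Definition H_vertices (m : nat) : {set Vt m} := [set x : Vt m | x != None].

Definition H_edges (m : nat) : {set {set Vt m}} :=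
  [set e : {set Vt m} |
     [exists i : 'I_m.+1, e == triangle m i.+1] ||
     [exists q : 'I_m, exists j : 'I_3, exists t : 'I_2,
        e == [set vx m q.+2 j.+1; vx m q.+1 j.+1; vx m q.+1 (j.+1 + t.+1)]]].

Definition H_ (m : nat) : hypergraph (Vt m) := (H_vertices m, H_edges m).

Definition G_edges (m : nat) : {set {set Vt m}} :=
  (H_edges m :\ triangle m 1)
  :|: [set [set newv m; vx m m.+1 i.+1; vx m m.+1 i.+2] | i : 'I_2]
  :|: [set [set newv m; vx m 1 j.+1; vx m m.+1 j.+1] | j : 'I_3].

Definition G_ (m : nat) : hypergraph (Vt m) := (H_vertices m :|: [set newv m], G_edges m).

(* Main.v *)
Require Import Defs.
From mathcomp Require Import all_boot zify.
Set Implicit Arguments. Unset Strict Implicit. Unset Printing Implicit Defensive.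

Definition ok2 (a b c : nat) : bool := (1 < size (undup [:: a; b; c]) < 3).
Lemma ok2P a b c : ok2 a b c <-> ((a = b /\ b <> c) \/ (b = c /\ a <> b) \/ (a = c /\ a <> b)).
Proof.
rewrite /ok2 /= !inE.
case: (eqVneq a b) => [->|hab]; case: (eqVneq b c) => [->|hbc]; rewrite ?eqxx /=;
  try case: (eqVneq a c) => [?|hac]; subst; rewrite ?eqxx ?inE /= ; try lia.
Qed.
Lemma nok2P a b c : ~~ ok2 a b c -> (a = b /\ b = c) \/ (a <> b /\ b <> c /\ a <> c).
Proof. move=> h. have : ~ (ok2 a b c) by apply/negP. rewrite ok2P. lia. Qed.

Ltac destr := repeat match goal with H : is_true (ok2 _ _ _) |- _ =>
  move/ok2P: H => [[? ?]|[[? ?]|[? ?]]]; subst; try congruence end.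

Definition link6 (x0 x1 x2 y0 y1 y2 : nat) : Prop :=
  ok2 y0 x0 x1 /\ ok2 y0 x0 x2 /\ ok2 y1 x1 x2 /\ ok2 y1 x1 x0 /\ ok2 y2 x2 x0 /\ ok2 y2 x2 x1.

Lemma L2 x0 x1 x2 y0 y1 y2 z0 z1 z2 : ok2 x0 x1 x2 -> ok2 y0 y1 y2 -> ok2 z0 z1 z2 ->
  link6 x0 x1 x2 y0 y1 y2 -> link6 y0 y1 y2 z0 z1 z2 ->
  z0 = x0 /\ z1 = x1 /\ z2 = x2.
Proof.
rewrite /link6 => ? ? ? [? [? [? [? [? ?]]]]] [? [? [? [? [? ?]]]]].
destr; repeat split; congruence.
Qed.

Lemma L0 x0 x1 x2 y0 y1 y2 : ~~ ok2 x0 x1 x2 -> ok2 y0 y1 y2 -> link6 x0 x1 x2 y0 y1 y2 ->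
  x1 = x0 /\ x2 = x0 /\ y0 <> x0 /\ y1 <> x0 /\ y2 <> x0.
Proof.
move=> /nok2P [[? ?]|[? [? ?]]]; subst;
rewrite /link6 => ? [? [? [? [? [? ?]]]]]; destr; repeat split; congruence.
Qed.

Lemma L1 c y0 y1 y2 z0 z1 z2 : ok2 y0 y1 y2 -> ok2 z0 z1 z2 -> y0 <> c -> y1 <> c -> y2 <> c ->
  link6 y0 y1 y2 z0 z1 z2 -> z0 <> c /\ z1 <> c /\ z2 <> c.
Proof.
rewrite /link6 => ? ? ? ? ? [? [? [? [? [? ?]]]]].
destr; repeat split; congruence.
Qed.

Lemma F1 w x0 x1 x2 : ok2 x0 x1 x2 -> ok2 w x0 x1 -> ok2 w x1 x2 ->
  ok2 w x0 x0 -> ok2 w x1 x1 -> ok2 w x2 x2 -> False.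
Proof. move=> *; destr. Qed.

Lemma F2 w c z0 z1 z2 : ok2 z0 z1 z2 -> z0 <> c -> z1 <> c -> z2 <> c ->
  ok2 w z0 z1 -> ok2 w z1 z2 -> ok2 w c z0 -> ok2 w c z1 -> ok2 w c z2 -> False.
Proof. move=> *; destr. Qed.

Lemma uncol_g n g w : odd n -> 3 <= n -> (forall i j, g i (j + 3) = g i j) ->
  (forall i, 2 <= i <= n -> ok2 (g i 0) (g i 1) (g i 2)) ->
  (forall q j t, 1 <= q < n -> j < 3 -> t < 2 -> ok2 (g q.+1 j) (g q j) (g q (j + t.+1))) ->
  (forall i, i < 2 -> ok2 w (g n i) (g n i.+1)) ->
  (forall j, j < 3 -> ok2 w (g 1 j) (g n j)) -> False.
Proof.
move=> hodd hn hper hT hL hC hD.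
have LK q : 1 <= q < n -> link6 (g q 0) (g q 1) (g q 2) (g q.+1 0) (g q.+1 1) (g q.+1 2).
  move=> hq.
  have h3 : g q 3 = g q 0 by rewrite -(hper q 0).
  have h4 : g q 4 = g q 1 by rewrite -(hper q 1).
  have := hL q 0 0 hq isT isT; have := hL q 0 1 hq isT isT;
  have := hL q 1 0 hq isT isT; have := hL q 1 1 hq isT isT;
  have := hL q 2 0 hq isT isT; have := hL q 2 1 hq isT isT.
  rewrite /= h3 h4 /link6. tauto.
have [n' En] : exists n', n = n' * 2 + 1.
  exists n./2. rewrite -[n in LHS]odd_double_half hodd muln2 addnC //.
have C0 := hC 0 isT; have C1 := hC 1 isT.
have D0 := hD 0 isT; have D1 := hD 1 isT; have D2 := hD 2 isT.
case: (boolP (ok2 (g 1 0) (g 1 1) (g 1 2))) => h1.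
- have claim : forall p, p <= n' -> g (p * 2 + 1) 0 = g 1 0 /\ g (p * 2 + 1) 1 = g 1 1 /\ g (p * 2 + 1) 2 = g 1 2.
    elim=> [|p IH] hp; first by [].
    have [e0 [e1 e2]] := IH (ltnW hp).
    have b1 : 2 <= (p * 2 + 1).+1 <= n by lia.
    have b2 : 2 <= (p * 2 + 1).+2 <= n by lia.
    have b3 : 1 <= p * 2 + 1 < n by lia.
    have b4 : 1 <= (p * 2 + 1).+1 < n by lia.
    have X := L2 _ (hT _ b1) (hT _ b2) (LK _ b3) (LK _ b4).
    rewrite e0 e1 e2 in X.
    have E : p.+1 * 2 + 1 = (p * 2 + 1).+2 by lia.
    rewrite E; exact: X h1.
  have [e0 [e1 e2]] := claim n' (leqnn _).
  rewrite -En in e0 e1 e2.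
  rewrite e0 e1 e2 in C0 C1 D0 D1 D2.
  exact: (F1 h1 C0 C1 D0 D1 D2).
- have b2 : 2 <= 2 <= n by lia.
  have b1 : 1 <= 1 < n by lia.
  have [e1 [e2 [y0 [y1 y2]]]] := L0 h1 (hT 2 b2) (LK 1 b1).
  have claim : forall i, 2 <= i <= n -> g i 0 <> g 1 0 /\ g i 1 <> g 1 0 /\ g i 2 <> g 1 0.
    elim=> [|i IH] hi; first by [].
    case: (eqVneq i 1) => [->|hi1]; first by split.
    have hi' : 2 <= i <= n by lia.
    have hi'' : 1 <= i < n by lia.
    have [a [b c]] := IH hi'.
    exact: (L1 (hT i hi') (hT i.+1 hi) a b c (LK i hi'')).
  have bn : 2 <= n <= n by lia.
  have [a [b c]] := claim n bn.
  rewrite e1 e2 in D1 D2.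
  exact: (F2 (hT n bn) a b c C0 C1 D0 D1 D2).
Qed.


Lemma set3_cond (T : finType) (f : T -> nat) (a b c : T) : a != b -> a != c -> b != c ->
  (1 < size (undup [seq f x | x <- enum [set a; b; c]]) < #|[set a; b; c]|) = ok2 (f a) (f b) (f c).
Proof.
move=> ab ac bc.
have hp : perm_eq (enum [set a; b; c]) [:: a; b; c].
  apply: uniq_perm; first exact: enum_uniq.
    by rewrite /= !inE negb_or ab ac bc.
  by move=> x; rewrite mem_enum !inE orbA.
rewrite cardE (perm_size hp) /ok2.
have -> // : size (undup [seq f x | x <- enum [set a; b; c]]) = size (undup [:: f a; f b; f c]).
apply: perm_size; apply: perm_undup => x.
by rewrite (perm_mem (perm_map f hp)).
Qed.

Lemma vx_eq m i i' j j' : 0 < i <= m.+1 -> 0 < i' <= m.+1 ->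
  (vx m i j == vx m i' j') = (i == i') && ((j.-1) %% 3 == (j'.-1) %% 3).
Proof.
move=> hi hi'.
rewrite /vx (inj_eq (@Some_inj _)) xpair_eqE -!(inj_eq val_inj) /= !inordK ?ltn_mod //; try lia.
Qed.

Lemma vx_None m i j : vx m i j != None. Proof. by []. Qed.

Inductive code := Tri of nat | Lnk of nat & nat & nat | Cc of nat | Dd of nat.

Definition goodc (n : nat) (g : nat -> nat -> nat) (w : nat) (c : code) : bool :=
  match c with
  | Tri i => ok2 (g i 0) (g i 1) (g i 2)
  | Lnk q j t => ok2 (g q.+1 j) (g q j) (g q (j + t.+1))
  | Cc i => ok2 w (g n i) (g n i.+1)
  | Dd j => ok2 w (g 1 j) (g n j)
  end.

Definition valid (n : nat) (c : code) : bool :=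
  match c with
  | Tri i => 2 <= i <= n
  | Lnk q j t => [&& 1 <= q < n, j < 3 & t < 2]
  | Cc i => i < 2
  | Dd j => j < 3
  end.

Definition edge_of (m : nat) (c : code) : {set Vt m} :=
  match c with
  | Tri i => triangle m i
  | Lnk q j t => [set vx m q.+1 j.+1; vx m q j.+1; vx m q (j.+1 + t.+1)]
  | Cc i => [set newv m; vx m m.+1 i.+1; vx m m.+1 i.+2]
  | Dd j => [set newv m; vx m 1 j.+1; vx m m.+1 j.+1]
  end.

Definition gf m (f : Vt m -> nat) (i j : nat) : nat := f (vx m i j.+1).

Definition pcond (T : finType) (f : T -> nat) (e : {set T}) : bool :=
  1 < size (undup [seq f x | x <- enum e]) < #|e|.

Lemma edge_ok m f c : 2 <= m -> valid m.+1 c ->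
  pcond f (edge_of m c) = goodc m.+1 (gf f) (f None) c.
Proof.
move=> hm; case: c => [i|q j t|i|j] /= hv; rewrite /pcond.
- rewrite /triangle set3_cond ?vx_eq //; lia.
- rewrite set3_cond ?vx_eq ?addSn //; try lia.
- rewrite set3_cond ?vx_eq //; try lia.
- rewrite set3_cond ?vx_eq //; try lia.
Qed.

Lemma G_edgesP m e : 2 <= m ->
  e \in G_edges m <-> exists c, valid m.+1 c /\ e = edge_of m c.
Proof.
move=> hm; rewrite /G_edges !inE; split.
- case/orP => [/orP [/andP [hne /orP [/existsP [i /eqP Ei]|/existsP [q /existsP [j /existsP [t /eqP ->]]]]]
              | /imsetP [i _ ->]] | /imsetP [j _ ->]].
  + exists (Tri i.+1); split => //=; rewrite Ei in hne.
    have := ltn_ord i; case: (nat_of_ord i) hne => [|i'] /=; first by rewrite eqxx.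
    move=> _; lia.
  + exists (Lnk q.+1 j t); split => //=.
    have := ltn_ord q; have := ltn_ord j; have := ltn_ord t; lia.
  + by exists (Cc i); rewrite /= ltn_ord.
  + by exists (Dd j); rewrite /= ltn_ord.
- case=> [[i|q j t|i|j] [/= hv ->]].
  + apply/orP; left; apply/orP; left; apply/andP; split.
      apply/negP => /eqP E.
      have : vx m i 1 \in triangle m i by rewrite /triangle !inE eqxx.
      rewrite E /triangle !inE !vx_eq //; lia.
    apply/orP; left; apply/existsP.
    have hi : i.-1 < m.+1 by lia.
    exists (Ordinal hi) => /=. by rewrite prednK //; lia.
  + move: hv => /and3P [hq hj ht].
    apply/orP; left; apply/orP; left; apply/andP; split.
      apply/negP => /eqP E.
      have : vx m q.+1 j.+1 \in triangle m 1 by rewrite -E !inE eqxx.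
      rewrite /triangle !inE !vx_eq //; lia.
    apply/orP; right.
    have hq' : q.-1 < m by lia.
    apply/existsP; exists (Ordinal hq'); apply/existsP; exists (Ordinal hj);
    apply/existsP; exists (Ordinal ht) => /=.
    by rewrite prednK //; lia.
  + apply/orP; left; apply/orP; right; apply/imsetP. by exists (Ordinal hv).
  + apply/orP; right; apply/imsetP. by exists (Ordinal hv).
Qed.




Definition T3 := (nat * nat * nat)%type.
Definition col3 (X : T3) (j : nat) : nat :=
  match j %% 3 with 0 => X.1.1 | 1 => X.1.2 | _ => X.2 end.
Definition comp3 (X : T3) : T3 := (1 - X.1.1, 1 - X.1.2, 1 - X.2).
Definition tri3 (X : T3) := ok2 (col3 X 0) (col3 X 1) (col3 X 2).
Definition link3 (X Y : T3) :=
  all (fun j => all (fun t => ok2 (col3 Y j) (col3 X j) (col3 X (j + t.+1))) (iota 0 2)) (iota 0 3).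

Lemma link3P X Y j t : link3 X Y -> j < 3 -> t < 2 -> ok2 (col3 Y j) (col3 X j) (col3 X (j + t.+1)).
Proof.
move=> /allP h hj ht.
have hj' : j \in iota 0 3 by rewrite mem_iota; lia.
have ht' : t \in iota 0 2 by rewrite mem_iota; lia.
exact: (allP (h j hj') t ht').
Qed.

Definition T1 (q0 : nat) (B A : T3) (r : nat) : T3 :=
  let X := if r <= q0 then B else A in if odd r then X else comp3 X.
Definition g1 q0 B A := fun r j => col3 (T1 q0 B A r) j.

Lemma tmpl_ok n q0 B A w c0 : odd n -> 1 <= q0 <= n ->
  tri3 B && tri3 (comp3 B) -> tri3 A && tri3 (comp3 A) ->
  link3 B (comp3 B) && link3 (comp3 B) B -> link3 A (comp3 A) && link3 (comp3 A) A ->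
  (q0 < n -> forall j t, j < 3 -> t < 2 -> Lnk q0 j t <> c0 ->
     ok2 (col3 (if odd q0 then comp3 A else A) j) (col3 (if odd q0 then B else comp3 B) j)
         (col3 (if odd q0 then B else comp3 B) (j + t.+1))) ->
  (forall i, i < 2 -> Cc i <> c0 -> ok2 w (col3 (if n <= q0 then B else A) i) (col3 (if n <= q0 then B else A) i.+1)) ->
  (forall j, j < 3 -> Dd j <> c0 -> ok2 w (col3 B j) (col3 (if n <= q0 then B else A) j)) ->
  forall c, valid n c -> c <> c0 -> goodc n (g1 q0 B A) w c.
Proof.
move=> hn hq0 /andP [hB1 hB2] /andP [hA1 hA2] /andP [hLB1 hLB2] /andP [hLA1 hLA2] hQ hC hD.
case=> [i|q j t|i|j] /= hv hne; rewrite /g1 /T1.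
- by case: (i <= q0); case: (odd i).
- move: hv => /and3P [hq hj ht]. rewrite oddS.
  case: (ltngtP q q0) => [lt|gt|eq].
  + by case: (odd q) => /=; apply: link3P.
  + by case: (odd q) => /=; apply: link3P.
  + subst q.
    have hq0n : q0 < n by lia.
    by have := hQ hq0n j t hj ht hne; case: (odd q0).
- rewrite -[odd n]/(odd n) hn. exact: hC.
- have -> : 1 <= q0 by lia. rewrite hn. exact: hD.
Qed.

Ltac fin_tmpl :=
  [ > by [] | by [] | by vm_compute | by vm_compute | by vm_compute | by vm_compute
  | let hlt := fresh in let j := fresh in let t := fresh in let hj := fresh in
    let ht := fresh in let hne := fresh in
    move=> hlt j t hj ht; case: j hj => [|[|[|]]] // _; case: t ht => [|[|]] // _ hne;
    (try by case: (odd _); vm_compute); by case: hne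
  | let i := fresh in let hi := fresh in let hne := fresh in
    move=> i hi; rewrite ?leqnn; (try match goal with |- context [?a <= ?b] => rewrite (_ : (a <= b) = false); [|lia] end);
    case: i hi => [|[|]] // _ hne; (try by vm_compute); by case: hne
  | let i := fresh in let hi := fresh in let hne := fresh in
    move=> i hi; rewrite ?leqnn; (try match goal with |- context [?a <= ?b] => rewrite (_ : (a <= b) = false); [|lia] end);
    case: i hi => [|[|[|]]] // _ hne; (try by vm_compute); by case: hne ].

Lemma lnk_col n q0 j0 t0 : odd n -> 1 <= q0 < n -> j0 < 3 -> t0 < 2 ->
  exists g w, (forall i j, g i (j %% 3) = g i j) /\ forall c, valid n c -> c <> Lnk q0 j0 t0 -> goodc n g w c.
Proof.
move=> hn hq hj ht.
have hq' : 1 <= q0 <= n by lia.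
case: j0 hj => [|[|[|]]] // _; case: t0 ht => [|[|]] // _.
- exists (g1 q0 (0,0,1) (1,0,0)), 1; split; first by move=> ? ?; rewrite /g1 /col3 modn_mod.
   apply: tmpl_ok; fin_tmpl.
- exists (g1 q0 (0,1,0) (1,0,0)), 1; split; first by move=> ? ?; rewrite /g1 /col3 modn_mod.
   apply: tmpl_ok; fin_tmpl.
- exists (g1 q0 (0,1,1) (1,0,1)), 0; split; first by move=> ? ?; rewrite /g1 /col3 modn_mod.
   apply: tmpl_ok; fin_tmpl.
- exists (g1 q0 (0,0,1) (0,1,0)), 1; split; first by move=> ? ?; rewrite /g1 /col3 modn_mod.
   apply: tmpl_ok; fin_tmpl.
- exists (g1 q0 (0,1,0) (0,0,1)), 1; split; first by move=> ? ?; rewrite /g1 /col3 modn_mod.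
   apply: tmpl_ok; fin_tmpl.
- exists (g1 q0 (0,1,1) (1,1,0)), 0; split; first by move=> ? ?; rewrite /g1 /col3 modn_mod.
   apply: tmpl_ok; fin_tmpl.
Qed.

Lemma cd_col n c0 : odd n -> 1 <= n -> (exists i, i < 2 /\ c0 = Cc i) \/ (exists j, j < 3 /\ c0 = Dd j) ->
  exists g w, (forall i j, g i (j %% 3) = g i j) /\ forall c, valid n c -> c <> c0 -> goodc n g w c.
Proof.
move=> hn h1 [[i [hi ->]]|[j [hj ->]]].
- have hq' : 1 <= n <= n by lia.
  case: i hi => [|[|]] // _.
  + exists (g1 n (0,1,1) (0,1,1)), 2; split; first by move=> ? ?; rewrite /g1 /col3 modn_mod.
   apply: tmpl_ok; fin_tmpl.
  + exists (g1 n (1,1,0) (1,1,0)), 2; split; first by move=> ? ?; rewrite /g1 /col3 modn_mod.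
   apply: tmpl_ok; fin_tmpl.
- have hq' : 1 <= n <= n by lia.
  case: j hj => [|[|[|]]] // _.
  + exists (g1 n (0,1,1) (0,1,1)), 0; split; first by move=> ? ?; rewrite /g1 /col3 modn_mod.
   apply: tmpl_ok; fin_tmpl.
  + exists (g1 n (1,0,1) (1,0,1)), 0; split; first by move=> ? ?; rewrite /g1 /col3 modn_mod.
   apply: tmpl_ok; fin_tmpl.
  + exists (g1 n (1,1,0) (1,1,0)), 0; split; first by move=> ? ?; rewrite /g1 /col3 modn_mod.
   apply: tmpl_ok; fin_tmpl.
Qed.

Definition T2 (i0 : nat) (r : nat) : T3 :=
  if r == 1 then (0,0,0)
  else if r < i0 then (if odd r then (2,1,1) else (1,2,2))
  else if r == i0 then (if odd i0 then (1,1,1) else (2,2,2))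
  else if odd i0 then (if odd r then (2,0,0) else (0,2,2))
  else (if odd r then (1,0,0) else (0,1,1)).
Definition w2 n i0 := if i0 == n then 0 else if odd i0 then 2 else 1.

Ltac decide_cmps := repeat match goal with
  | |- context [?a == ?b] => (rewrite (_ : (a == b) = true); [|lia]) || (rewrite (_ : (a == b) = false); [|lia])
  | |- context [?a <= ?b] => (rewrite (_ : (a <= b) = true); [|lia]) || (rewrite (_ : (a <= b) = false); [|lia])
  end.

Lemma tri_col n i0 : odd n -> 2 <= i0 <= n ->
  exists g w, (forall i j, g i (j %% 3) = g i j) /\ forall c, valid n c -> c <> Tri i0 -> goodc n g w c.
Proof.
move=> hn hi0; exists (fun r j => col3 (T2 i0 r) j), (w2 n i0).
split; first by move=> ? ?; rewrite /col3 modn_mod.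
case=> [i|q j t|i|j] /= hv hne; rewrite /T2 /w2.
- have hii : i != i0 by apply/eqP => E; apply: hne; rewrite E.
  decide_cmps; case: (ltngtP i i0) => h; try lia; by case: (odd i); case: (odd i0).
- clear hne; move: hv => /and3P [hq hj ht].
  case: j hj => [|[|[|]]] // _; case: t ht => [|[|]] // _;
  (case: (eqVneq q i0) => e1; [subst i0 | case: (eqVneq q.+1 i0) => e2; [subst i0 | ]];
  case: (eqVneq q 1) => e3; [subst q | | subst q | | subst q | case: (ltnP q i0) => e4];
  decide_cmps; rewrite ?oddS; (try case: (odd q)); (try case: (odd i0))); by vm_compute.
- clear hne; case: i hv => [|[|]] // _; (case: (eqVneq i0 n) => h; [subst i0 | ];
  decide_cmps; rewrite ?hn; (try case: (odd i0)); by vm_compute).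
- clear hne; case: j hv => [|[|[|]]] // _; (case: (eqVneq i0 n) => h; [subst i0 | ];
  decide_cmps; rewrite ?hn; (try case: (odd i0)); by vm_compute).
Qed.

Lemma col_exists n c0 : 3 <= n -> odd n -> valid n c0 ->
  exists g w, (forall i j, g i (j %% 3) = g i j) /\ forall c, valid n c -> c <> c0 -> goodc n g w c.
Proof.
move=> h3 hn; case: c0 => [i|q j t|i|j] /= hv.
- exact: tri_col.
- move: hv => /and3P [hq hj ht]; exact: lnk_col.
- apply: cd_col => //; [lia | left; by exists i].
- apply: cd_col => //; [lia | right; by exists j].
Qed.

Definition fg m (g : nat -> nat -> nat) (w : nat) : Vt m -> nat :=
  fun x => match x with None => w | Some p => g (nat_of_ord p.1).+1 (nat_of_ord p.2) end.

Lemma gf_fg m g w i j : (forall i j, g i (j %% 3) = g i j) -> 0 < i <= m.+1 ->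
  gf (@fg m g w) i j = g i j.
Proof.
move=> hp hi; rewrite /gf /fg /vx /= !inordK ?ltn_mod //; last lia.
by rewrite prednK ?hp //; lia.
Qed.

Lemma goodc_ext n g g' w c : 0 < n -> valid n c -> (forall i j, 0 < i <= n -> g i j = g' i j) ->
  goodc n g w c = goodc n g' w c.
Proof.
move=> hn0 hv he; case: c hv => [i|q j t|i|j] /= hv.
- rewrite !he //; lia.
- move: hv => /and3P [hq hj ht]; rewrite !he //; lia.
- rewrite !he //; lia.
- rewrite !he //; lia.
Qed.

Lemma card3 (T : finType) (a b c : T) : a != b -> a != c -> b != c -> #|[set a; b; c]| = 3.
Proof.
move=> ab ac bc.
have hp : perm_eq (enum [set a; b; c]) [:: a; b; c].
  apply: uniq_perm; first exact: enum_uniq.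
    by rewrite /= !inE negb_or ab ac bc.
  by move=> x; rewrite mem_enum !inE orbA.
by rewrite cardE (perm_size hp).
Qed.

Lemma card_edge m c : 2 <= m -> valid m.+1 c -> #|edge_of m c| = 3.
Proof.
move=> hm; case: c => [i|q j t|i|j] /= hv.
- rewrite /triangle card3 ?vx_eq //; lia.
- rewrite card3 ?vx_eq //; lia.
- rewrite card3 ?vx_eq //; lia.
- rewrite card3 ?vx_eq //; lia.
Qed.

Lemma vx_surj m (a : 'I_m.+1) (b : 'I_3) : Some (a, b) = vx m a.+1 b.+1.
Proof.
rewrite /vx /=; congr (Some (_, _)); apply: val_inj; rewrite /= inordK ?modn_small //.
Qed.

Lemma covered m (x : Vt m) : 2 <= m -> exists c, valid m.+1 c /\ x \in edge_of m c.
Proof.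
move=> hm; case: x => [[a b]|].
- case: (posnP a) => ha.
  + exists (Dd b); split; first exact: ltn_ord.
    by rewrite /= vx_surj ha !inE eqxx.
  + exists (Tri a.+1); split; first by rewrite /=; have := ltn_ord a; lia.
    rewrite /= /triangle vx_surj !inE.
    case: b => [[|[|[|]]] hb] //=; by rewrite eqxx ?orbT.
- exists (Dd 0); split => //. by rewrite /= !inE eqxx.
Qed.

Theorem mainTheorem18 (k : nat) (hk : 1 <= k) : minimal_uncolorable (G_ k.*2).
Proof.
set m := k.*2.
have hm : 2 <= m by rewrite /m -(doubleS 0) leq_double.
have hn : odd m.+1 by rewrite /m /= odd_double.
have h3 : 3 <= m.+1 by lia.
have Vall : forall x : Vt m, x \in (G_ m).1.
  by move=> x; rewrite !inE; case: x.
split; [|split].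
- split.
  + by move=> e _; apply/subsetP => x _; exact: Vall.
  + move=> e1 e2 /(G_edgesP _ hm) [c1 [hv1 ->]] /(G_edgesP _ hm) [c2 [hv2 ->]] hs.
    apply/eqP; rewrite eqEcard hs !card_edge //.
- move=> [f hf].
  have HG : forall c, valid m.+1 c -> goodc m.+1 (gf f) (f None) c.
    move=> c hv; rewrite -edge_ok //; apply: hf; apply/(G_edgesP _ hm); by exists c.
  apply: (uncol_g (n := m.+1) (g := gf f) (w := f None)) => //.
  + by move=> i j; rewrite /gf /vx /= modnDr.
  + by move=> i hi; exact: (HG (Tri i) hi).
  + move=> q j t hq hj ht; apply: (HG (Lnk q j t)); by rewrite /= hq hj ht.
  + by move=> i hi; exact: (HG (Cc i) hi).
  + by move=> j hj; exact: (HG (Dd j) hj).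
- move=> [V' E'] [[hE _] [hV hE']] hne /=.
  case: (boolP [exists e, (e \in G_edges m) && (e \notin E')]) => hex.
  + case/existsP: hex => e0 /andP [he0 hn0].
    case/(G_edgesP _ hm): he0 => c0 [hv0 E0].
    have [g [w [hp hg]]] := col_exists h3 hn hv0.
    exists (fg g w) => e /= he.
    have heG : e \in G_edges m := subsetP hE' e he.
    case/(G_edgesP _ hm): heG => c [hv Ee].
    have hc : c <> c0 by move=> Ec; move: hn0; rewrite E0 -Ec -Ee he.
    rewrite Ee; have := edge_ok (fg g w) hm hv; rewrite /pcond => ->.
    rewrite (@goodc_ext _ _ g) ?hg // => i j hi; exact: gf_fg.
  + exfalso; apply: hne.
    have EE : E' = G_edges m.
      apply/eqP; rewrite eqEsubset hE' /=; apply/subsetP => e he.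
      move: hex; rewrite negb_exists => /forallP /(_ e); rewrite he /= negbK; exact.
    have VV : V' = (G_ m).1.
      apply/setP => x; rewrite Vall; apply/idP.
      have [c [hv hx]] := covered x hm.
      have : edge_of m c \in E' by rewrite EE; apply/(G_edgesP _ hm); exists c.
      move/hE => /subsetP; exact.
    by rewrite VV EE.
Qed.
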